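(* Define primes $p_i$, $i\geq 1$, recursively: $p_1=5$, and for $i>1$, $p_i$ is the smallest prime larger than $p_{i-1}$ that does not divide $|{}^2G_2(3^{p_j})|$ for any $1\leq j<i$. Set $q_i=3^{p_i}$, $R_i={}^2G_2(q_i)$, and for a positive integer $k$ let $P_k=R_1\times\cdots\times R_k$. Then for every $i\geq 1$: (a) $\pi(R_i)\cap\pi(R_j)=\{2,3,7\}$ for all $j\neq i$; (b) $p_i\notin\pi(R_j)$ for all $j$; in particular $5\notin\pi(R_j)$ for all $j$; (c) $\pi(q_i+1)\neq\{2\}$ and $\pi(q_i-1)\neq\{2\}$; $7$ divides one of $q_i-\sqrt{3q_i}+1$, $q_i+\sqrt{3q_i}+1$; and $\pi(q_i+\sqrt{3q_i}+1)\neq\{7\}$ and $\pi(q_i-\sqrt{3q_i}+1)\neq\{7\}$; (d) for every positive integer $k$ and every integer $m>3$ (with $3^m$ such that ${}^2G_2(3^m)$ is defined, i.e. $m$ odd), if $\pi({}^2G_2(3^m))\subseteq\pi(P_k)$, then $m\in\{p_1,\dots,p_k\}$.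
   Context: For a finite group $X$ (or positive integer $n$), $\pi(X)$ (resp. $\pi(n)$) denotes the set of prime divisors of $|X|$ (resp. $n$). ${}^2G_2(q)$, $q=3^\alpha$ with $\alpha$ odd, is the small Ree group, of order $q^3(q-1)(q^3+1)$. *)

(* Defs.v *)
From mathcomp Require Import all_boot.
Set Implicit Arguments. Unset Strict Implicit. Unset Printing Implicit Defensive.

Definition ree_order (q : nat) : nat := q ^ 3 * (q - 1) * (q ^ 3 + 1).

(* The search range (l, l + B!+1] is large
   enough: any prime divisor of B!+1 with B = l + prod_j |2G2(3^{p_j})| works. *)
Definition next_p (s : seq nat) : nat :=
  let l := last 5 s in
  let B := l + \prod_(p <- s) ree_order (3 ^ p) in
  head 0 [seq x <- iota l.+1 (B`!.+1)
           | prime x & all (fun p => ~~ (x %| ree_order (3 ^ p))) s].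

(* ree_primes n = [:: p_1; ...; p_{n+1}] *)
Fixpoint ree_primes (n : nat) : seq nat :=
  match n with
  | 0 => [:: 5]
  | n'.+1 => let s := ree_primes n' in rcons s (next_p s)
  end.

(* p_i (1-indexed, i >= 1) *)
Definition reeP (i : nat) : nat := last 5 (ree_primes i.-1).

Definition reeQ (i : nat) : nat := 3 ^ reeP i.

(* sqrt(3 q_i) = 3^{(p_i + 1)/2}, p_i odd *)
Definition reeS (i : nat) : nat := 3 ^ (reeP i).+1./2.

(* Main.v *)
From Stdlib Require Import Classical.
From mathcomp Require Import zify.
Require Import Defs.
From mathcomp Require Import all_boot.
Set Implicit Arguments. Unset Strict Implicit. Unset Printing Implicit Defensive.

Definition S (x n : nat) := \sum_(i < n) x ^ i.

Lemma binom2 y n : exists c, (1 + y) ^ n = 1 + n * y + c * y ^ 2.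
Proof.
elim: n => [|n [c Hc]]; first by exists 0; rewrite expn0 !mul0n.
exists (c + c * y + n); rewrite expnS Hc !expnS expn0. nia.
Qed.

Lemma geo_exp y n : exists w, S (1 + y) n = n + y * 'C(n, 2) + y ^ 2 * w.
Proof.
elim: n => [|n [w IH]]; first by exists 0; rewrite /S big_ord0 bin0n /= !muln0.
have [c Hc] := binom2 y n.
exists (w + c); rewrite /S big_ord_recr /= -/(S _ _) IH Hc binS bin1 expnS expn1. nia.
Qed.

Lemma predn_S x n : (x ^ n).-1 = x.-1 * S x n.
Proof. exact: predn_exp. Qed.

Lemma S_dvd r y n : r %| y -> (r %| S (1 + y) n) = (r %| n).
Proof.
move=> ry; have [w ->] := geo_exp y n.
have h : r %| y * 'C(n, 2) + y ^ 2 * w.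
  by rewrite dvdn_add // ?dvdn_mulr // expnS -mulnA dvdn_mulr.
by rewrite -addnA dvdn_addl.
Qed.

Lemma S_gt0 x n : 0 < n -> 0 < S x n.
Proof. by case: n => // n _; rewrite /S big_ord_recl expn0 addSn. Qed.

Lemma S_log1 r y : prime r -> odd r -> r %| y -> logn r (S (1 + y) r) = 1.
Proof.
move=> pr odr ry; have r1 := prime_gt1 pr.
have Sgt0 : 0 < S (1 + y) r by apply: S_gt0; lia.
have [w Hw] := geo_exp y r.
have d1 : r %| S (1 + y) r by rewrite S_dvd.
have d2 : ~~ (r ^ 2 %| S (1 + y) r).
  rewrite Hw; move: ry => /dvdnP [t ->]; rewrite bin2odd //.
  have -> : r + t * r * (r * r.-1./2) + (t * r) ^ 2 * w
           = r + r ^ 2 * (t * r.-1./2 + t ^ 2 * w).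
    rewrite !expnS !expn0; nia.
  rewrite dvdn_addl; last by apply: dvdn_mulr.
  have hr : r < r ^ 2 by rewrite expnS expn1; nia.
  by rewrite gtnNdvd //; lia.
have h1 : logn r (S (1 + y) r) <= 1.
  by move: d2; rewrite pfactor_dvdn // -ltnNge ltnS.
have h2 : 1 <= logn r (S (1 + y) r).
  by rewrite -(pfactor_dvdn 1) // expn1.
lia.
Qed.

Lemma S_log0 r y n : prime r -> r %| y -> ~~ (r %| n) -> logn r (S (1 + y) n) = 0.
Proof.
move=> pr ry rn; rewrite lognE; case: ifP => //; rewrite S_dvd // (negPf rn).
by rewrite !andbF.
Qed.
Lemma S_mul x m n : 1 < x -> S x (m * n) = S x m * S (x ^ m) n.
Proof.
move=> x1; apply/eqP; rewrite -(eqn_pmul2l (m := x.-1)); last by lia.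
by rewrite -predn_S expnM predn_S predn_S mulnA.
Qed.

Lemma S_logn_aux r a k : prime r -> odd r -> ~~ (r %| k) -> 0 < k ->
  forall y, r %| y -> 0 < y -> logn r (S (1 + y) (k * r ^ a)) = a.
Proof.
move=> pr odr rk k0; elim: a => [|a IH] y ry y0.
  by rewrite expn0 muln1 S_log0.
have r1 := prime_gt1 pr.
rewrite expnSr mulnA S_mul; last by lia.
have M0 : 0 < k * r ^ a by rewrite muln_gt0 k0 expn_gt0 ltnW.
set M := k * r ^ a in M0 *.
have SM0 : 0 < S (1 + y) M by apply: S_gt0.
have -> : (1 + y) ^ M = 1 + y * S (1 + y) M.
  have e := predn_S (1 + y) M; rewrite add1n /= in e.
  have p : 0 < y.+1 ^ M by rewrite expn_gt0.
  rewrite add1n; lia.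
rewrite lognM ?S_gt0 ?IH ?S_log1 ?addn1 //; first by rewrite dvdn_mulr.
by apply: ltnW.
Qed.

Lemma S_logn r y n : prime r -> odd r -> r %| y -> 0 < y -> 0 < n ->
  logn r (S (1 + y) n) = logn r n.
Proof.
move=> pr odr ry y0 n0.
have [k ck nE] := pfactor_coprime pr n0.
have k0 : 0 < k by move: n0; rewrite nE; case: k {ck nE}.
by rewrite {1}nE S_logn_aux // -prime_coprime.
Qed.

Lemma lte7 a e : 3 ^ a.+1 %| 7 ^ e - 1 -> 3 ^ a %| e.
Proof.
case: e => [|e]; first by rewrite dvdn0.
rewrite subn1 (_ : 7 = 1 + 6) // predn_S /=.
rewrite pfactor_dvdn // ?muln_gt0 ?S_gt0 // lognM ?S_gt0 // S_logn //.
by rewrite (_ : logn 3 6 = 1) // add1n ltnS -pfactor_dvdn.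
Qed.

Lemma gcd_pow b m n : 0 < b -> gcdn (b ^ m).-1 (b ^ n).-1 = (b ^ gcdn m n).-1.
Proof.
move=> b0.
have H : forall s m n, m + n <= s -> gcdn (b ^ m).-1 (b ^ n).-1 = (b ^ gcdn m n).-1.
  elim=> [|s IH] {}m {}n.
    move=> h; have m0 : m = 0 by lia.
    have n0 : n = 0 by lia.
    by rewrite m0 n0.
  wlog nm : m n / n <= m.
    move=> W h; case: (leqP n m) => c; first exact: W.
    by rewrite gcdnC [gcdn m n]gcdnC W //; [apply: ltnW | rewrite addnC].
  move=> h; case: n nm h => [|n] nm h; first by rewrite expn0 /= !gcdn0.
  have -> : (b ^ m).-1 = b ^ (m - n.+1) * (b ^ n.+1).-1 + (b ^ (m - n.+1)).-1.
    have e : b ^ m = b ^ (m - n.+1) * b ^ n.+1 by rewrite -expnD subnK.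
    have p1 : 0 < b ^ (m - n.+1) by rewrite expn_gt0 b0.
    have p2 : 0 < b ^ n.+1 by rewrite expn_gt0 b0.
    rewrite e; move: p1 p2; generalize (b ^ (m - n.+1)) (b ^ n.+1) => X Y p1 p2.
    case: X p1 => // X _; case: Y p2 => // Y _; rewrite mulSn /= addnC; nia.
  rewrite gcdnC gcdnMDl.
  have -> : gcdn m n.+1 = gcdn n.+1 (m - n.+1).
    by rewrite gcdnC -{1}(subnK nm) addnC gcdnDl.
  rewrite IH //; lia.
by move=> *; apply: H (leqnn _).
Qed.
Lemma ree_order_gt0 b : 0 < b -> 0 < ree_order (3 ^ b).
Proof.
move=> b0; rewrite /ree_order !muln_gt0 expn_gt0 /= addn1 /= andbT subn_gt0.
by rewrite -[X in X < _](expn0 3) ltn_exp2l.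
Qed.

Lemma dvd_prod_seq (s : seq nat) (F : nat -> nat) p :
  p \in s -> F p %| \prod_(q <- s) F q.
Proof.
elim: s => // a s IH; rewrite in_cons big_cons => /orP [/eqP -> | /IH h].
  exact: dvdn_mulr.
exact: dvdn_mull.
Qed.

Lemma next_p_spec s : all (fun p => 0 < p) s ->
  [/\ prime (next_p s), last 5 s < next_p s &
      all (fun p => ~~ (next_p s %| ree_order (3 ^ p))) s].
Proof.
move=> spos; rewrite /next_p.
set l := last 5 s; set B := l + \prod_(p <- s) ree_order (3 ^ p).
set Q := fun x => prime x && all (fun p => ~~ (x %| ree_order (3 ^ p))) s.
have Bf : 1 < B`!.+1 by rewrite ltnS fact_gt0.
set x0 := pdiv B`!.+1.
have px0 : prime x0 by apply: pdiv_prime.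
have Bx0 : B < x0.
  rewrite ltnNge; apply/negP => h.
  have : x0 %| B`! by rewrite dvdn_fact // prime_gt0.
  have : x0 %| B`!.+1 by apply: pdiv_dvd.
  rewrite -addn1 => h1 h2; move: h1; rewrite dvdn_addr // => h3.
  have := dvdn_leq (ltnSn 0) h3; have := prime_gt1 px0; lia.
have Qx0 : Q x0.
  rewrite /Q px0 /=; apply/allP => p ps; rewrite gtnNdvd //.
    apply: ree_order_gt0; exact: (allP spos).
  apply: leq_ltn_trans Bx0; rewrite /B; apply: leq_trans (leq_addl _ _).
  apply: dvdn_leq; last exact: dvd_prod_seq.
  rewrite big_seq_cond; apply: prodn_cond_gt0 => q /andP [qs _]; apply: ree_order_gt0.
  exact: (allP spos).
have ix0 : x0 \in iota l.+1 B`!.+1.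
  rewrite mem_iota; apply/andP; split; first by apply: leq_ltn_trans Bx0; apply: leq_addr.
  have := pdiv_leq (ltnW Bf); rewrite -/x0; lia.
have : x0 \in [seq x <- iota l.+1 B`!.+1 | Q x] by rewrite mem_filter Qx0.
case E : [seq x <- iota l.+1 B`!.+1 | Q x] => [|y t] //= _.
have : y \in [seq x <- iota l.+1 B`!.+1 | Q x] by rewrite E mem_head.
rewrite mem_filter => /andP [/andP [py ay] iy]; split=> //.
by move: iy; rewrite mem_iota => /andP [h _].
Qed.

Lemma ree_primesS n : ree_primes n.+1 = rcons (ree_primes n) (next_p (ree_primes n)).
Proof. by []. Qed.

Lemma reePS n : reeP n.+2 = next_p (ree_primes n).
Proof. by rewrite /reeP /= last_rcons. Qed.

Lemma ree_primesE n : ree_primes n = [seq reeP j | j <- iota 1 n.+1].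
Proof.
elim: n => [|n IH]; first by [].
rewrite ree_primesS (_ : n.+2 = n.+1 + 1); last by rewrite addn1.
by rewrite iotaD map_cat cats1 -IH add1n reePS.
Qed.

Lemma ree_primes_prime n : all prime (ree_primes n).
Proof.
elim: n => [|n IH] //; rewrite ree_primesS all_rcons IH andbT.
have : all (fun p => 0 < p) (ree_primes n).
  by apply/allP => p /(allP IH) /prime_gt0.
by case/next_p_spec.
Qed.

Lemma reeP_prime i : prime (reeP i).
Proof.
rewrite /reeP; have := mem_last 5 (ree_primes i.-1); rewrite in_cons => /orP [/eqP -> //|].
by move/(allP (ree_primes_prime _)).
Qed.

Lemma reeP_lastE n : last 5 (ree_primes n) = reeP n.+1.
Proof. by []. Qed.

Lemma reeP_spec n :
  [/\ reeP n.+1 < reeP n.+2 &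
      forall j, 1 <= j <= n.+1 -> ~~ (reeP n.+2 %| ree_order (3 ^ reeP j))].
Proof.
have : all (fun p => 0 < p) (ree_primes n).
  by apply/allP => p /(allP (ree_primes_prime n)) /prime_gt0.
case/next_p_spec; rewrite -reePS reeP_lastE => _ h1 h2; split=> // j hj.
apply: (allP h2); rewrite ree_primesE; apply: map_f; rewrite mem_iota; lia.
Qed.

Lemma reeP0 : reeP 0 = 5. Proof. by []. Qed.
Lemma reeP1 : reeP 1 = 5. Proof. by []. Qed.

Lemma reeP_mono i j : 0 < i -> i < j -> reeP i < reeP j.
Proof.
move=> i0; elim: j => // j IH; rewrite ltnS leq_eqVlt => /orP [/eqP <-|h].
  by case: i i0 {IH} => // i _; case: (reeP_spec i).
apply: ltn_trans (IH h) _; case: j h {IH} => [|j] h; first lia.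
by case: (reeP_spec j).
Qed.

Lemma reeP_ge5 i : 5 <= reeP i.
Proof.
case: i => [|i] //; case: i => [|i] //; rewrite -reeP1; apply: ltnW; apply: reeP_mono; lia.
Qed.
Lemma dvd_pow x a b : a %| b -> (x ^ a).-1 %| (x ^ b).-1.
Proof. by case/dvdnP => c ->; rewrite mulnC expnM (predn_S (x ^ a)) dvdn_mulr. Qed.

Lemma dvd_gcd_pow x r m n : 0 < x -> r %| (x ^ m).-1 -> r %| (x ^ n).-1 ->
  r %| (x ^ gcdn m n).-1.
Proof. by move=> x0 h1 h2; rewrite -gcd_pow // dvdn_gcd h1 h2. Qed.

Lemma odd_plus x n : odd n -> x.+1 %| x ^ n + 1.
Proof.
move=> on; case: (posnP x) => [->|x0]; first by rewrite dvd1n.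
have <- : (n./2).*2.+1 = n by have := odd_double_half n; rewrite on; lia.
elim: (n./2) => [|k IH]; first by rewrite (_ : 0.*2.+1 = 1) // expn1 addn1.
have e : x ^ 2 * (x ^ (k.*2.+1) + 1) = (x ^ (k.+1).*2.+1 + 1) + x.-1 * x.+1.
  rewrite doubleS !expnS expn0; generalize (x ^ k.*2) => X.
  case: x {IH} x0 => [|x] //= _; nia.
have : x.+1 %| x ^ 2 * (x ^ (k.*2.+1) + 1) by apply: dvdn_mull.
by rewrite e dvdn_addl // dvdn_mull.
Qed.

Lemma S2 y : S y 2 = 1 + y.
Proof. by rewrite /S !big_ord_recr big_ord0 /= expn1. Qed.

Lemma sq_dvd x n : x ^ n + 1 %| (x ^ (2 * n)).-1.
Proof. by rewrite mulnC expnM predn_S S2 addnC dvdn_mull. Qed.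

Lemma two_of x r : 0 < x -> r %| x + 1 -> r %| x.-1 -> r %| 2.
Proof.
move=> x0 h1 h2; have e : x + 1 = x.-1 + 2 by lia.
by move: h1; rewrite e dvdn_addr.
Qed.

Lemma ro_prime r b : prime r -> r %| ree_order (3 ^ b) ->
  [\/ r = 3, r %| (3 ^ b).-1 | r %| 3 ^ (3 * b) + 1].
Proof.
move=> pr; rewrite /ree_order !Euclid_dvdM // Euclid_dvdX // subn1 -expnM (mulnC b 3) !orbb.
case/orP => [/orP [/andP [h _] | h] | h].
- by apply: Or31; apply/eqP; rewrite -dvdn_prime2.
- by apply: Or32.
- by apply: Or33.
Qed.

Lemma ro_dvd_pm r b : r %| (3 ^ b).-1 -> r %| ree_order (3 ^ b).
Proof. by move=> h; rewrite /ree_order subn1 dvdn_mulr // dvdn_mull. Qed.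

Lemma ro_dvd_pp r b : r %| 3 ^ (3 * b) + 1 -> r %| ree_order (3 ^ b).
Proof. by move=> h; rewrite /ree_order -expnM (mulnC b 3) dvdn_mull. Qed.

Lemma ro_dvd3 b : 0 < b -> 3 %| ree_order (3 ^ b).
Proof.
case: b => // b _; rewrite /ree_order -mulnA; apply: dvdn_mulr; apply: dvdn_exp => //.
by rewrite expnS dvdn_mulr.
Qed.

Lemma ro_six r b : prime r -> r != 3 -> r %| ree_order (3 ^ b) -> r %| (3 ^ (6 * b)).-1.
Proof.
move=> pr r3 /(ro_prime pr) [h|h|h].
- by rewrite h eqxx in r3.
- by apply: dvdn_trans h _; apply: dvd_pow; apply: dvdn_mull.
- apply: dvdn_trans h _; rewrite (_ : 6 * b = 2 * (3 * b)); last by rewrite mulnA.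
  exact: sq_dvd.
Qed.

Lemma not3 b : prime b -> 5 <= b -> ~~ (3 %| b).
Proof. by move=> pb b5; rewrite dvdn_prime2 //; apply/eqP => h; rewrite -h in b5. Qed.

Lemma odd_pr b : prime b -> 5 <= b -> odd b.
Proof.
move=> pb b5; apply/negPn; rewrite -dvdn2; apply/negP; rewrite dvdn_prime2 // => /eqP h.
by rewrite -h in b5.
Qed.

Lemma no13 b : 0 < b -> ~~ (3 %| b) -> ~~ (13 %| ree_order (3 ^ b)).
Proof.
move=> b0 b3; apply/negP => /(ro_prime (isT : prime 13)) [] // h.
- have : 13 %| (3 ^ gcdn b 3).-1 by apply: dvd_gcd_pow.
  by rewrite gcdnC; move: b3; rewrite -prime_coprime // /coprime => /eqP ->.
- have h2 : 13 %| (3 ^ (3 * b)).-1.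
    by apply: dvdn_trans (dvd_pow 3 (dvdn_mulr b (dvdnn 3))).
  by have := two_of (expn_gt0 3 (3 * b)) h h2.
Qed.

Lemma yes7 b : odd b -> 7 %| ree_order (3 ^ b).
Proof.
move=> ob; apply: ro_dvd_pp; rewrite expnM (_ : 3 ^ 3 = 27) //.
by apply: dvdn_trans (odd_plus 27 ob).
Qed.

Lemma yes2 b : 2 %| (3 ^ b).-1.
Proof. by rewrite predn_S dvdn_mulr. Qed.

Lemma fermat3 p : prime p -> p != 3 -> p %| (3 ^ p.-1).-1.
Proof.
move=> pp p3; have := fermat_little 3 pp.
move/eqP; rewrite eqn_mod_dvd; last first.
  by rewrite -{1}(expn1 3) leq_pexp2l // prime_gt0.
have -> : 3 ^ p - 3 = 3 * (3 ^ p.-1).-1.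
  rewrite -subn1 mulnBr muln1 -expnS prednK //; exact: prime_gt0.
by rewrite Gauss_dvdr // prime_coprime // dvdn_prime2.
Qed.

Lemma fermat_ndvd p : prime p -> odd p -> ~~ (p %| (3 ^ p).-1).
Proof.
move=> pp op; have := fermat_little 3 pp.
move/eqP; rewrite eqn_mod_dvd; last first.
  by rewrite -{1}(expn1 3) leq_pexp2l // prime_gt0.
have g3 : 3 <= 3 ^ p by rewrite -{1}(expn1 3) leq_pexp2l // prime_gt0.
have -> : (3 ^ p).-1 = (3 ^ p - 3) + 2 by lia.
move=> h; rewrite dvdn_addr // dvdn_prime2 //; apply/negP => /eqP h2.
by rewrite h2 in op.
Qed.

Lemma div728 p : prime p -> p %| 728 -> [|| p == 2, p == 7 | p == 13].
Proof.
move=> pp h; have : p \in primes 728 by rewrite mem_primes pp h.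
by rewrite (_ : primes 728 = [:: 2; 7; 13]) // !inE.
Qed.

Lemma part_a a b r : prime a -> prime b -> 5 <= a -> 5 <= b -> a != b ->
  (r \in primes (ree_order (3 ^ a))) && (r \in primes (ree_order (3 ^ b)))
  = (r \in [:: 2; 3; 7]).
Proof.
move=> pa pb a5 b5 ab.
have a0 : 0 < a by lia.
have b0 : 0 < b by lia.
apply/idP/idP.
  rewrite !mem_primes => /andP [/and3P [pr _ ha] /and3P [_ _ hb]].
  case: (eqVneq r 3) => [->|r3] //.
  have := dvd_gcd_pow (isT : 0 < 3) (ro_six pr r3 ha) (ro_six pr r3 hb).
  rewrite -muln_gcdr (_ : gcdn a b = 1); last first.
    by apply/eqP; rewrite -/(coprime a b) prime_coprime // dvdn_prime2.
  move=> /(div728 pr) /or3P [] /eqP re; rewrite re //.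
  by have := no13 b0 (not3 pb b5); rewrite -re hb.
rewrite !inE => /or3P [] /eqP ->; rewrite !mem_primes /= !ree_order_gt0 //=.
- by rewrite !ro_dvd_pm // yes2.
- by rewrite !ro_dvd3.
- by rewrite !yes7 // odd_pr.
Qed.

Lemma part_b p b : prime p -> prime b -> 5 <= p -> p <= b -> p != 7 ->
  ~~ (p %| ree_order (3 ^ b)).
Proof.
move=> pp pb p5 pb' p7; apply/negP => h.
have p3 : p != 3 by apply/eqP => e; rewrite e in p5.
have := dvd_gcd_pow (isT : 0 < 3) (ro_six pp p3 h) (fermat3 pp p3).
rewrite gcdnC Gauss_gcdl; last first.
  rewrite coprime_sym prime_coprime //; apply/negP => /dvdn_leq h1.
  have : 0 < p.-1 by lia.
  by move/h1; lia.
move=> h2.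
have : p %| 728.
  apply: dvdn_trans h2 _; apply: (dvd_pow 3 (dvdn_gcdr _ _)).
case/(div728 pp)/or3P => /eqP e.
- by rewrite e in p5.
- by rewrite e in p7.
- by have := no13 (prime_gt0 pb) (not3 pb (leq_trans p5 pb')); rewrite -e h.
Qed.
Lemma pure r0 n : prime r0 -> 0 < n -> (forall r, prime r -> r %| n -> r = r0) ->
  n = r0 ^ logn r0 n.
Proof.
move=> p0 n0 H; have pos : 0 < r0 ^ logn r0 n by rewrite expn_gt0 prime_gt0.
apply: eqn_from_log => // r; case pr: (prime r); last by rewrite [LHS]lognE [RHS]lognE pr.
case: (eqVneq r r0) => [->|ne]; first by rewrite pfactorK.
rewrite lognX (logn_prime r p0) (negPf ne) muln0 lognE pr n0 /=.
by case: ifP => // h; have := H r pr h; move/eqP: ne.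
Qed.

Lemma pure_primes r0 n : prime r0 -> 0 < n -> primes n =i [:: r0] -> n = r0 ^ logn r0 n.
Proof.
move=> p0 n0 H; apply: pure => // r pr rn.
have : r \in primes n by rewrite mem_primes pr n0 rn.
by rewrite H inE => /eqP.
Qed.

Lemma pow3_mod8 p : odd p -> 3 ^ p %% 8 = 3.
Proof.
move=> op; have <- : (p./2).*2.+1 = p by have := odd_double_half p; rewrite op; lia.
elim: (p./2) => [|k IH] //.
rewrite doubleS expnS expnS; move: IH; generalize (3 ^ k.*2.+1) => X; lia.
Qed.

Lemma pow2_mod8 e : 2 ^ e %% 8 = 4 -> e = 2.
Proof.
case: e => [|[|[|e]]] //; rewrite !expnS; generalize (2 ^ e) => X; lia.
Qed.

Lemma pow2_mod4 e : 2 ^ e %% 4 = 2 -> e = 1.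
Proof.
case: e => [|[|e]] //; rewrite !expnS; generalize (2 ^ e) => X; lia.
Qed.

Lemma big3 p : 5 <= p -> 243 <= 3 ^ p.
Proof. by move=> p5; rewrite (_ : 243 = 3 ^ 5) // leq_exp2l. Qed.

Lemma part_c12 p : prime p -> 5 <= p ->
  ~ (primes (3 ^ p + 1) =i [:: 2]) /\ ~ (primes (3 ^ p - 1) =i [:: 2]).
Proof.
move=> pp p5; have m8 := pow3_mod8 (odd_pr pp p5).
have bg := big3 p5.
split=> H.
- have n0 : 0 < 3 ^ p + 1 by rewrite addn1.
  have := pure_primes (isT : prime 2) n0 H; set e := logn 2 _ => E.
  have : 2 ^ e %% 8 = 4 by rewrite -E; move: m8; generalize (3 ^ p) => X; lia.
  move/pow2_mod8 => e2; move: E bg; rewrite e2; generalize (3 ^ p) => X; lia.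
- have n0 : 0 < 3 ^ p - 1 by lia.
  have := pure_primes (isT : prime 2) n0 H; set e := logn 2 _ => E.
  have : 2 ^ e %% 4 = 2 by rewrite -E; move: m8 bg; generalize (3 ^ p) => X; lia.
  move/pow2_mod4 => e2; move: E bg; rewrite e2; generalize (3 ^ p) => X; lia.
Qed.

Lemma ident q s : s <= q -> s * s = 3 * q ->
  (q - s + 1) * (q + s + 1) * (q + 1) = q ^ 3 + 1.
Proof.
move=> h1 h2; have [d dE] : exists d, q = s + d by exists (q - s); lia.
rewrite dE addKn (_ : (s + d) ^ 3 = (s + d) * (s + d) * (s + d)); last first.
  by rewrite !expnS expn0 muln1 mulnA.
rewrite dE in h2; nia.
Qed.

Lemma half_t p : odd p -> (p.+1./2).*2 = p.+1.
Proof. by move=> op; have := odd_double_half p.+1; rewrite /= op. Qed.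

Lemma part_c3 p : prime p -> 5 <= p ->
  7 %| 3 ^ p - 3 ^ p.+1./2 + 1 \/ 7 %| 3 ^ p + 3 ^ p.+1./2 + 1.
Proof.
move=> pp p5; have op := odd_pr pp p5; have ht := half_t op.
set t := p.+1./2 in ht *.
have sq : 3 ^ t * 3 ^ t = 3 * 3 ^ p by rewrite -expnD addnn ht expnS.
have sle : 3 ^ t <= 3 ^ p by rewrite leq_exp2l //; move: ht; rewrite -addnn; lia.
have h7 : 7 %| (3 ^ p) ^ 3 + 1.
  rewrite -expnM mulnC expnM (_ : 3 ^ 3 = 27) //.
  by apply: dvdn_trans (odd_plus 27 op).
have n7 : ~~ (7 %| 3 ^ p + 1).
  apply/negP => h.
  have h1 : 7 %| (3 ^ (2 * p)).-1 by apply: dvdn_trans h (sq_dvd 3 p).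
  have := dvd_gcd_pow (isT : 0 < 3) h1 (isT : 7 %| (3 ^ (2 * 3)).-1).
  rewrite -muln_gcdr (_ : gcdn p 3 = 1) //.
  by apply/eqP; rewrite -/(coprime p 3) coprime_sym prime_coprime // not3.
move: h7; rewrite -(ident sle sq) !Euclid_dvdM // (negPf n7) orbF.
by case/orP; [left|right].
Qed.

Lemma t_bound t : 3 <= t -> 2 * t <= 3 ^ t.-1.
Proof.
have H : forall u, 2 * (u + 3) <= 3 ^ (u + 2).
  elim=> [|u IH] //; rewrite !addSn expnS; move: IH; generalize (3 ^ (u + 2)) => X; lia.
move=> t3; have [u ->] : exists u, t = u + 3 by exists (t - 3); lia.
by rewrite addnS /= -addnS.
Qed.

Lemma no7pow t c e : 3 <= t -> 0 < c -> 3 ^ t * c + 1 <= 9 ^ t ->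
  3 ^ t * c + 1 = 7 ^ e -> False.
Proof.
move=> t3 c0 hb he.
have p0 : 0 < 3 ^ t * c by rewrite muln_gt0 expn_gt0 c0.
have e0 : 0 < e by case: e he => //; rewrite expn0; lia.
have : 3 ^ (t.-1).+1 %| 7 ^ e - 1.
  by rewrite prednK ?(leq_trans _ t3) // -he addnK dvdn_mulr.
move/lte7 => /(dvdn_leq e0) h1.
have h2 : 7 ^ (2 * t) <= 7 ^ e by rewrite leq_exp2l // (leq_trans (t_bound t3)).
have h3 : 9 ^ t < 7 ^ (2 * t) by rewrite expnM ltn_exp2r ?(leq_trans _ t3).
move: he hb h2 h3; generalize (7 ^ e) (9 ^ t) (7 ^ (2 * t)) => A B C; lia.
Qed.

Lemma part_c4 p : prime p -> 5 <= p ->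
  ~ (primes (3 ^ p + 3 ^ p.+1./2 + 1) =i [:: 7]) /\
  ~ (primes (3 ^ p - 3 ^ p.+1./2 + 1) =i [:: 7]).
Proof.
move=> pp p5; have op := odd_pr pp p5; have ht := half_t op.
set t := p.+1./2 in ht *.
have t3 : 3 <= t by lia.
have pE : p = t + t.-1 by lia.
have A9 : 9 <= 3 ^ t.-1 by rewrite (_ : 9 = 3 ^ 2) // leq_exp2l //; lia.
have B0 : 0 < 3 ^ t by rewrite expn_gt0.
have N9 : 9 ^ t = 3 ^ t * 3 ^ t.-1 * 3.
  rewrite mulnC -expnD -expnS (_ : 9 = 3 ^ 2) // -expnM; congr (_ ^ _); lia.
rewrite pE expnD; set A := 3 ^ t.-1 in A9 N9 *; set B := 3 ^ t in B0 N9 *.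
split=> H.
- have n0 : 0 < B * A + B + 1 by rewrite addn1.
  have := pure_primes (isT : prime 7) n0 H; set e := logn 7 _ => E.
  apply: (@no7pow t (A + 1) e t3); first by rewrite addn1.
    rewrite N9 mulnDr muln1; nia.
  by rewrite -E mulnDr muln1.
- have n0 : 0 < B * A - B + 1 by rewrite addn1.
  have := pure_primes (isT : prime 7) n0 H; set e := logn 7 _ => E.
  apply: (@no7pow t (A - 1) e t3); first by lia.
    rewrite N9 mulnBr muln1; nia.
  by rewrite -E mulnBr muln1.
Qed.
Lemma dvdn_from_log d n : 0 < d -> 0 < n ->
  (forall r, prime r -> logn r d <= logn r n) -> d %| n.
Proof.
move=> d0 n0 H.
have g0 : 0 < gcdn d n by rewrite gcdn_gt0 d0.
suff e : gcdn d n = d by rewrite -e dvdn_gcdr.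
apply/esym.
apply: eqn_from_log => // r; case pr: (prime r).
  by rewrite logn_gcd // (minn_idPl (H r pr)).
by rewrite [LHS]lognE [RHS]lognE pr.
Qed.

Lemma odd_prime_div n : odd n -> 1 < n -> exists2 r, prime r & odd r && (r %| n).
Proof.
move=> on n1; exists (pdiv n); first exact: pdiv_prime.
rewrite pdiv_dvd andbT -[odd _]negbK -dvdn2; apply/negP => h2.
by have := dvdn_trans h2 (pdiv_dvd n); rewrite dvdn2 on.
Qed.

Lemma odd_dvd d n : odd n -> d %| n -> odd d.
Proof.
move=> on dn; rewrite -[odd _]negbK -dvdn2; apply/negP => h2.
by have := dvdn_trans h2 dn; rewrite dvdn2 on.
Qed.

Lemma S3_odd m : odd m -> odd (S 3 m).
Proof.
move=> om; rewrite -[odd _]negbK -dvdn2 (_ : 3 = 1 + 2) // S_dvd //.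
by rewrite dvdn2 om.
Qed.

Lemma odd_prime_3 m : odd m -> 1 < m -> exists2 r, prime r & odd r && (r %| (3 ^ m).-1).
Proof.
move=> om m1; have e : (3 ^ m).-1 = 2 * S 3 m by rewrite predn_S.
have : 9 <= 3 ^ m by rewrite (_ : 9 = 3 ^ 2) // leq_exp2l.
rewrite -(prednK (expn_gt0 3 m)) e => h9.
have S1 : 1 < S 3 m by lia.
have [r pr /andP [or rd]] := odd_prime_div (S3_odd om) S1.
by exists r => //; rewrite or dvdn_mull.
Qed.

Lemma odd_r2 r : prime r -> odd r -> ~~ (r %| 2).
Proof. by move=> pr or; rewrite dvdn_prime2 //; apply/eqP => e; rewrite e in or. Qed.

Lemma key m r b : odd m -> prime r -> odd r -> r %| (3 ^ m).-1 -> prime b ->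
  r %| ree_order (3 ^ b) -> (b %| m) && (r %| (3 ^ b).-1).
Proof.
move=> om pr or rm pb /(ro_prime pr) [r3|h|h].
- exfalso; move: rm; rewrite r3 => rm.
  have m0 : 0 < m by case: m om rm.
  have : 3 %| (3 ^ m).-1 + 1 by rewrite addn1 prednK ?expn_gt0 // -(prednK m0) expnS dvdn_mulr.
  by rewrite dvdn_addr.
- rewrite h andbT; apply/negPn/negP => bm.
  have := dvd_gcd_pow (isT : 0 < 3) rm h.
  rewrite gcdnC; move: bm; rewrite -prime_coprime // /coprime => /eqP ->.
  by apply/negP; apply: odd_r2.
- exfalso.
  have h1 : r %| (3 ^ (2 * (3 * b))).-1 by apply: dvdn_trans h (sq_dvd 3 (3 * b)).
  have := dvd_gcd_pow (isT : 0 < 3) rm h1.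
  rewrite mulnC Gauss_gcdl ?coprimen2 // => h2.
  have h3 : r %| (3 ^ (3 * b)).-1 by apply: dvdn_trans h2 (dvd_pow 3 (dvdn_gcdr _ _)).
  by have := two_of (expn_gt0 3 (3 * b)) h h3; apply/negP; apply: odd_r2.
Qed.

Lemma prim2 p : prime p -> odd p ->
  exists2 r, prime r & [&& odd r, r %| (3 ^ (p * p)).-1 & ~~ (r %| (3 ^ p).-1)].
Proof.
move=> pp op; set x := 3 ^ p.
have p1 := prime_gt1 pp.
have x1 : 3 <= x by rewrite /x -{1}(expn1 3) leq_exp2l //; lia.
have dE : (3 ^ (p * p)).-1 = x.-1 * S x p by rewrite expnM predn_S.
have xE : x = 1 + x.-1 by lia.
have Codd : odd (S x p).
  rewrite -[odd _]negbK -dvdn2 xE S_dvd ?dvdn2 ?op //.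
  by rewrite -dvdn2 /x predn_S dvdn_mulr.
have C1 : 1 < S x p.
  rewrite ltnNge; apply/negP => h.
  have : (3 ^ (p * p)).-1 <= x.-1 by rewrite dE; nia.
  rewrite /x => h2; have : 3 ^ (p * p) <= 3 ^ p by move: h2; rewrite -!subn1; lia.
  rewrite leq_exp2l //; nia.
have [r pr /andP [or rC]] := odd_prime_div Codd C1.
exists r => //; rewrite or dE dvdn_mull //=.
apply/negP => rx; move: rC; rewrite xE S_dvd // dvdn_prime2 // => /eqP rp.
by move: rx; rewrite rp; apply/negP; apply: fermat_ndvd.
Qed.
Lemma ineq_ab p q : 3 <= p -> 3 <= q -> (5 <= p \/ 5 <= q) -> p.-1 + q.-1 + q <= p * q.-1.
Proof. case: p => // a; case: q => // b /= ha hb [h|h]; nia. Qed.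

Lemma primpq p p' : prime p -> prime p' -> odd p -> odd p' -> p != p' ->
  exists2 r, prime r & [&& odd r, r %| (3 ^ (p * p')).-1,
                        ~~ (r %| (3 ^ p).-1) & ~~ (r %| (3 ^ p').-1)].
Proof.
move=> pp pp' op op' ne.
case: (classic (exists2 r, prime r & [&& odd r, r %| (3 ^ (p * p')).-1,
                        ~~ (r %| (3 ^ p).-1) & ~~ (r %| (3 ^ p').-1)])) => // nH.
exfalso.
have p3 := odd_prime_gt2 op pp; have p3' := odd_prime_gt2 op' pp'.
set x := 3 ^ p; set z := 3 ^ p'.
have x1 : 3 <= x by rewrite /x -{1}(expn1 3) leq_exp2l //; lia.
have z1 : 3 <= z by rewrite /z -{1}(expn1 3) leq_exp2l //; lia.
have dE : (3 ^ (p * p')).-1 = x.-1 * S x p' by rewrite expnM predn_S.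
have dE' : (3 ^ (p * p')).-1 = z.-1 * S z p by rewrite mulnC expnM predn_S.
have xE : x = 1 + x.-1 by lia.
have zE : z = 1 + z.-1 by lia.
have Codd : odd (S x p').
  rewrite -[odd _]negbK -dvdn2 xE S_dvd ?dvdn2 ?op' //.
  by rewrite -dvdn2 /x predn_S dvdn_mulr.
have C0 : 0 < S x p' by apply: S_gt0; lia.
have D0 : 0 < S z p by apply: S_gt0; lia.
have H : forall r, prime r -> r %| S x p' -> (r %| x.-1) || (r %| z.-1).
  move=> r pr rC; apply/negPn/negP; rewrite negb_or => /andP [h1 h2].
  apply: nH; exists r => //; rewrite (odd_dvd Codd rC) h1 h2 dE dvdn_mull //.
have N0 : 0 < p * p' * z.-1 by rewrite !muln_gt0 prime_gt0 // prime_gt0 //=; lia.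
have CD : S x p' %| p * p' * z.-1.
  apply: dvdn_from_log => // r pr.
  case rC: (r %| S x p'); last by rewrite lognE rC !andbF.
  have or := odd_dvd Codd rC.
  have pg := prime_gt0 pp; have pg' := prime_gt0 pp'; have zg : 0 < z.-1 by lia.
  rewrite lognM ?muln_gt0 ?pg ?pg' // lognM //.
  case/orP: (H r pr rC) => h.
    have Sx : logn r (S x p') = logn r p'.
      by rewrite [in S x p']xE S_logn //; lia.
    rewrite Sx; lia.
  have : logn r (x.-1 * S x p') = logn r z.-1 + logn r p.
    have Sz : logn r (S z p) = logn r p.
      by rewrite [in S z p]zE S_logn //; lia.
    by rewrite -dE dE' lognM // Sz.
  rewrite lognM //; lia.
have h1 : 3 ^ (p * p'.-1) <= S x p'.
  rewrite /S -(prednK (prime_gt0 pp')) big_ord_recr /= -/(S _ _) /x -expnM.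
  exact: leq_addl.
have h2 := dvdn_leq N0 CD.
have h3 : p <= 3 ^ p.-1 by have := ltn_expl p.-1 (isT : 1 < 3); lia.
have h4 : p' <= 3 ^ p'.-1 by have := ltn_expl p'.-1 (isT : 1 < 3); lia.
have h6 : p * p' * z.-1 < 3 ^ p.-1 * 3 ^ p'.-1 * z.
  have hA : 0 < 3 ^ p.-1 * 3 ^ p'.-1 by rewrite muln_gt0 !expn_gt0.
  apply: leq_ltn_trans (leq_mul (leq_mul h3 h4) (leqnn _)) _.
  rewrite ltn_pmul2l //; lia.
have h7 : 3 ^ p.-1 * 3 ^ p'.-1 * z = 3 ^ (p.-1 + p'.-1 + p') by rewrite !expnD.
have p5 : 5 <= p \/ 5 <= p'.
  have n4 : p != 4 by apply/eqP => e; rewrite e in pp.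
  have n4' : p' != 4 by apply/eqP => e; rewrite e in pp'.
  move/eqP: ne n4 n4' => ne /eqP n4 /eqP n4'; lia.
have h8 : 3 ^ (p.-1 + p'.-1 + p') <= 3 ^ (p * p'.-1).
  by rewrite leq_exp2l // ineq_ab.
move: h1 h2 h6 h7 h8; generalize (3 ^ (p * p'.-1)) (S x p') (p * p' * z.-1)
  (3 ^ p.-1 * 3 ^ p'.-1 * z) (3 ^ (p.-1 + p'.-1 + p')) => A B C D E; lia.
Qed.
Lemma comp_case m : odd m -> 1 < m -> ~~ prime m ->
  exists m', exists2 r, prime r & [&& odd r, m' %| m & r %| (3 ^ m').-1] /\
     (forall l, prime l -> l %| m' -> ~~ (r %| (3 ^ l).-1)).
Proof.
move=> om m1 npm.
set p := pdiv m; have pp : prime p by apply: pdiv_prime.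
have pm : p %| m by apply: pdiv_dvd.
have [c mE] : exists c, m = c * p by exists (m %/ p); rewrite divnK.
have c1 : 1 < c.
  case: (ltnP 1 c) => // hc.
  have : c = 0 \/ c = 1 by lia.
  case=> ce; first by move: m1; rewrite mE ce.
  by move: npm; rewrite mE ce mul1n pp.
set p' := pdiv c; have pp' : prime p' by apply: pdiv_prime.
have pc : p' %| c by apply: pdiv_dvd.
have op : odd p by apply: odd_dvd om pm.
have op' : odd p'.
  by apply: odd_dvd om _; rewrite mE; apply: dvdn_mulr.
case: (eqVneq p' p) => [e|ne].
- have [r pr /and3P [or rd rn]] := prim2 pp op.
  exists (p * p), r => //; split.
    by rewrite or rd andbT mE dvdn_mul // -e.
  move=> l pl; rewrite Euclid_dvdM // orbb (dvdn_prime2 pl pp) => /eqP ->.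
  exact: rn.
- have ne' : p != p' by rewrite eq_sym.
  have [r pr /and4P [or rd rn rn']] := primpq pp pp' op op' ne'.
  exists (p * p'), r => //; split.
    by rewrite or rd andbT mE mulnC dvdn_mul.
  by move=> l pl; rewrite Euclid_dvdM // (dvdn_prime2 pl pp) (dvdn_prime2 pl pp') => /orP [/eqP -> | /eqP ->].
Qed.
Lemma part_d k m : 3 < m -> odd m ->
  (forall r, prime r -> r %| (3 ^ m).-1 ->
     exists2 j, 1 <= j <= k & r %| ree_order (3 ^ reeP j)) ->
  exists2 j, 1 <= j <= k & m = reeP j.
Proof.
move=> m3 om H.
have m1 : 1 < m by lia.
case pm: (prime m).
- have [r pr /andP [or rd]] := odd_prime_3 om m1.
  have [j hj hr] := H r pr rd; exists j => //.
  have /andP [bm _] := key om pr or rd (reeP_prime j) hr.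
  by apply/eqP; rewrite eq_sym -dvdn_prime2 // reeP_prime.
- have [m' [r pr [/and3P [or m'm rd] hl]]] := comp_case om m1 (negbT pm).
  have rd' : r %| (3 ^ m).-1 by apply: dvdn_trans rd (dvd_pow 3 m'm).
  have [j hj hr] := H r pr rd'.
  have om' := odd_dvd om m'm.
  have /andP [bm rb] := key om' pr or rd (reeP_prime j) hr.
  by have := hl _ (reeP_prime j) bm; rewrite rb.
Qed.

Lemma prime_dvd_prod r k (F : nat -> nat) : prime r ->
  r %| \prod_(1 <= j < k.+1) F j -> exists2 j, 1 <= j <= k & r %| F j.
Proof.
move=> pr; elim: k => [|k IH].
  rewrite big_geq // => h; have := prime_gt1 pr; have := dvdn_leq (ltnSn 0) h; lia.
rewrite big_nat_recr //= Euclid_dvdM // => /orP [/IH [j hj hr]|h].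
  by exists j => //; lia.
by exists k.+1 => //; lia.
Qed.

Lemma reeP_ne7 i : reeP i != 7.
Proof.
case: i => [|[|n]] //; apply/eqP => e.
case: (reeP_spec n) => _ /(_ 1 (isT : 1 <= 1 <= n.+1)).
by rewrite e reeP1 yes7.
Qed.

Lemma reeP_le i j : 0 < i -> i <= j -> reeP i <= reeP j.
Proof.
move=> i0; rewrite leq_eqVlt => /orP [/eqP -> // | h].
by apply: ltnW; apply: reeP_mono.
Qed.

Lemma reeP_inj i j : 0 < i -> 0 < j -> i != j -> reeP i != reeP j.
Proof.
move=> i0 j0; case: (ltngtP i j) => // h _.
  by rewrite neq_ltn reeP_mono.
by rewrite neq_ltn orbC reeP_mono.
Qed.

Lemma part_b_full i j : 0 < i -> 0 < j -> ~~ (reeP i %| ree_order (3 ^ reeP j)).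
Proof.
move=> i0 j0; case: (ltnP j i) => h.
  case: i i0 h => [|[|n]] // _ h; first by lia.
  by case: (reeP_spec n) => _ /(_ j); apply; lia.
apply: part_b; rewrite ?reeP_prime ?reeP_ge5 ?reeP_ne7 //.
exact: reeP_le.
Qed.

Theorem lemma2p1 :
  (forall i : nat, 0 < i ->
     (* (a) *)
     (forall j : nat, 0 < j -> j != i ->
        forall r : nat,
          (r \in primes (ree_order (reeQ i))) && (r \in primes (ree_order (reeQ j)))
          = (r \in [:: 2; 3; 7]))
     (* (b) *)
  /\ (forall j : nat, 0 < j ->
        reeP i \notin primes (ree_order (reeQ j))
        /\ 5 \notin primes (ree_order (reeQ j)))
     (* (c) *)
  /\ ~ (primes (reeQ i + 1) =i [:: 2])
  /\ ~ (primes (reeQ i - 1) =i [:: 2])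
  /\ (7 %| reeQ i - reeS i + 1 \/ 7 %| reeQ i + reeS i + 1)
  /\ ~ (primes (reeQ i + reeS i + 1) =i [:: 7])
  /\ ~ (primes (reeQ i - reeS i + 1) =i [:: 7]))
  (* (d) *)
  /\ (forall k m : nat, 0 < k -> 3 < m -> odd m ->
        (forall r : nat, r \in primes (ree_order (3 ^ m)) ->
           r \in primes (\prod_(1 <= j < k.+1) ree_order (reeQ j))) ->
        exists2 j : nat, 1 <= j <= k & m = reeP j).
Proof.
split.
  move=> i i0; rewrite /reeQ /reeS.
  have pi := reeP_prime i; have p5 := reeP_ge5 i.
  have [c1 c2] := part_c12 pi p5.
  have [c4 c5] := part_c4 pi p5.
  split.
    move=> j j0 ji r; apply: part_a; rewrite ?reeP_prime ?reeP_ge5 //.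
    by apply: reeP_inj; rewrite // eq_sym.
  split.
    move=> j j0; rewrite !mem_primes !negb_and.
    have h1 := part_b_full i0 j0; have h2 := part_b_full (isT : 0 < 1) j0.
    by rewrite reeP1 in h2; rewrite h1 h2 !orbT.
  do 3 (split => //).
  exact: part_c3.
move=> k m k0 m3 om H; apply: (part_d m3 om) => r pr rd.
have m0 : 0 < m by lia.
have : r \in primes (ree_order (3 ^ m)).
  by rewrite mem_primes pr ree_order_gt0 // ro_dvd_pm.
move/H; rewrite mem_primes => /and3P [_ _ hd].
exact: prime_dvd_prod pr hd.
Qed.
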